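(* Let $A\in\mathbb{C}^{m\times n}$ and let $A^{(1)}\in\mathbb{C}^{n\times m}$ satisfy $AA^{(1)}A=A$. Then the following are equivalent: (1) $A^{\mathfrak{m}}$ exists; (2) $A^{\sim}A+I_n-A^{(1)}A$ is nonsingular; (3) $AA^{\sim}+I_m-AA^{(1)}$ is nonsingular. In this case, $$A^{\mathfrak{m}}=\left(A(A^{\sim}A+I_n-A^{(1)}A)^{-1}\right)^{\sim}=\left((AA^{\sim}+I_m-AA^{(1)})^{-1}A\right)^{\sim}.$$
   Context: For a positive integer $k$, the Minkowski metric matrix of order $k$ is $G_k=\mathrm{diag}(1,-I_{k-1})$ (with $G_1=(1)$). For $M\in\mathbb{C}^{p\times q}$, the Minkowski adjoint is $M^{\sim}=G_qM^*G_p$, where $M^*$ is the conjugate transpose. The Minkowski inverse of $A\in\mathbb{C}^{m\times n}$, denoted $A^{\mathfrak{m}}$, is a matrix $X\in\mathbb{C}^{n\times m}$ with $AXA=A$, $XAX=X$, $(AX)^{\sim}=AX$, $(XA)^{\sim}=XA$ (unique if it exists). *)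

(* Defs.v *)
From HB Require Import structures.
From mathcomp Require Import all_boot all_order all_algebra.
Set Implicit Arguments. Unset Strict Implicit. Unset Printing Implicit Defensive.
Import Order.TTheory GRing.Theory Num.Theory.
Local Open Scope ring_scope.

(* Complex scalars: an arbitrary numClosedFieldType C (e.g. algC, or complex R
   for a real closed field R), with complex conjugation Num.conj. *)

Definition mink_G (C : numClosedFieldType) (k : nat) : 'M[C]_k :=
  \matrix_(i < k, j < k) (if i == j then (if val i == 0%N then 1 else -1) else 0).

Definition conjtr (C : numClosedFieldType) (p q : nat) (M : 'M[C]_(p, q))
  : 'M[C]_(q, p) := (map_mx Num.conj M)^T.

Definition madj (C : numClosedFieldType) (p q : nat) (M : 'M[C]_(p, q))
  : 'M[C]_(q, p) := mink_G C q *m conjtr M *m mink_G C p.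

Definition is_minkowski_inverse (C : numClosedFieldType) (m n : nat)
  (A : 'M[C]_(m, n)) (X : 'M[C]_(n, m)) : Prop :=
  [/\ A *m X *m A = A, X *m A *m X = X,
      madj (A *m X) = A *m X & madj (X *m A) = X *m A].

Definition minkowski_inverse_exists (C : numClosedFieldType) (m n : nat)
  (A : 'M[C]_(m, n)) : Prop := exists X, is_minkowski_inverse A X.

(* Main.v *)
Require Import Defs.
From HB Require Import structures.
From mathcomp Require Import all_boot all_order all_algebra.
Import GRing.Theory Num.Theory.
Set Implicit Arguments. Unset Strict Implicit.
Local Open Scope ring_scope.

Section S.
Variable C : numClosedFieldType.

Lemma conjtrM p q r (M : 'M[C]_(p,q)) (N : 'M[C]_(q,r)) :
  conjtr (M *m N) = conjtr N *m conjtr M.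
Proof. by rewrite /conjtr map_mxM trmx_mul. Qed.

Lemma conjtrK p q (M : 'M[C]_(p,q)) : conjtr (conjtr M) = M.
Proof. by apply/matrixP=> i j; rewrite !mxE conjCK. Qed.

Lemma conjtrD p q (M N : 'M[C]_(p,q)) : conjtr (M + N) = conjtr M + conjtr N.
Proof. by rewrite /conjtr map_mxD linearD. Qed.

Lemma conjtrN p q (M : 'M[C]_(p,q)) : conjtr (- M) = - conjtr M.
Proof. by rewrite /conjtr map_mxN linearN. Qed.

Lemma conjtr1 p : conjtr (1%:M : 'M[C]_p) = 1%:M.
Proof. by rewrite /conjtr map_mx1 trmx1. Qed.

Lemma conjtrG p : conjtr (mink_G C p) = mink_G C p.
Proof.
apply/matrixP=> i j; rewrite !mxE eq_sym; case: eqP => [->|]; last by rewrite conjC0.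
by case: ifP; rewrite ?rmorph1 ?rmorphN1.
Qed.

Lemma GG p : mink_G C p *m mink_G C p = 1%:M.
Proof.
apply/matrixP=> i j; rewrite !mxE (bigD1 i) //= big1 ?addr0.
  rewrite !mxE eqxx; case: (i =P j) => [->|ne]; first by case: ifP; rewrite ?mulr1 ?mulrNN ?mulr1.
  by rewrite mulr0.
by move=> k /negbTE nk; rewrite !mxE eq_sym nk mul0r.
Qed.

Lemma madjM p q r (M : 'M[C]_(p,q)) (N : 'M[C]_(q,r)) :
  madj (M *m N) = madj N *m madj M.
Proof.
rewrite /madj conjtrM !mulmxA; congr (_ *m _); congr (_ *m _).
by rewrite -mulmxA GG mulmx1.
Qed.

Lemma madjK p q (M : 'M[C]_(p,q)) : madj (madj M) = M.
Proof.
rewrite /madj !conjtrM !conjtrG conjtrK !mulmxA GG mul1mx -mulmxA GG mulmx1 //.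
Qed.

Lemma madjD p q (M N : 'M[C]_(p,q)) : madj (M + N) = madj M + madj N.
Proof. by rewrite /madj conjtrD mulmxDr mulmxDl. Qed.

Lemma madjN p q (M : 'M[C]_(p,q)) : madj (- M) = - madj M.
Proof. by rewrite /madj conjtrN mulmxN mulNmx. Qed.

Lemma madjB p q (M N : 'M[C]_(p,q)) : madj (M - N) = madj M - madj N.
Proof. by rewrite madjD madjN. Qed.

Lemma madj1 p : madj (1%:M : 'M[C]_p) = 1%:M.
Proof. by rewrite /madj conjtr1 mulmx1 GG. Qed.

Lemma madj_unit p (M : 'M[C]_p) : M \in unitmx -> madj M \in unitmx.
Proof.
move=> U; have := mulVmx U => /(congr1 (@madj C p p)).
by rewrite madjM madj1 => /mulmx1_unit [].
Qed.

Lemma madj_unitE p (M : 'M[C]_p) : (madj M \in unitmx) = (M \in unitmx).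
Proof.
apply/idP/idP; last exact: madj_unit.
by move/madj_unit; rewrite madjK.
Qed.

Lemma madj_inv p (M : 'M[C]_p) : M \in unitmx -> invmx (madj M) = madj (invmx M).
Proof.
move=> U; have U' := madj_unit U.
have E : madj (invmx M) *m madj M = 1%:M by rewrite -madjM mulmxV // madj1.
by rewrite -[LHS]mul1mx -E -mulmxA mulmxV // mulmx1.
Qed.

Definition ad p q (M : 'M[C]_(p,q)) : 'M[C]_(q,p) := locked (madj M).
Lemma adE p q (M : 'M[C]_(p,q)) : madj M = ad M.
Proof. by rewrite /ad -lock. Qed.
Lemma adM p q r (M : 'M[C]_(p,q)) (N : 'M[C]_(q,r)) : ad (M *m N) = ad N *m ad M.
Proof. by rewrite -!adE madjM. Qed.
Lemma adK p q (M : 'M[C]_(p,q)) : ad (ad M) = M.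
Proof. by rewrite -!adE madjK. Qed.
Lemma adD p q (M N : 'M[C]_(p,q)) : ad (M + N) = ad M + ad N.
Proof. by rewrite -!adE madjD. Qed.
Lemma adB p q (M N : 'M[C]_(p,q)) : ad (M - N) = ad M - ad N.
Proof. by rewrite -!adE madjB. Qed.
Lemma ad1 p : ad (1%:M : 'M[C]_p) = 1%:M.
Proof. by rewrite -!adE madj1. Qed.
Lemma ad_unitE p (M : 'M[C]_p) : (ad M \in unitmx) = (M \in unitmx).
Proof. by rewrite -!adE madj_unitE. Qed.
Lemma ad_inv p (M : 'M[C]_p) : M \in unitmx -> invmx (ad M) = ad (invmx M).
Proof. by rewrite -!adE; apply: madj_inv. Qed.

Definition mi m n (A : 'M[C]_(m,n)) X :=
  [/\ A *m X *m A = A, X *m A *m X = X, ad (A *m X) = A *m X & ad (X *m A) = X *m A].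
Lemma miE m n (A : 'M[C]_(m,n)) X : is_minkowski_inverse A X <-> mi A X.
Proof. by rewrite /is_minkowski_inverse /mi !adE. Qed.

Lemma mi_adj m n (A : 'M[C]_(m,n)) X : mi A X -> mi (ad A) (ad X).
Proof.
case=> h1 h2 h3 h4; split.
- by rewrite -!adM mulmxA h1.
- by rewrite -!adM mulmxA h2.
- by rewrite -adM h4.
- by rewrite -adM h3.
Qed.

Lemma mi_uniq m n (A : 'M[C]_(m,n)) X Y : mi A X -> mi A Y -> X = Y.
Proof.
case=> h1 h2 h3 h4 [k1 k2 k3 k4].
have e1 : X = X *m ad X *m ad A by rewrite -mulmxA -adM h3 mulmxA h2.
have e2 : ad A = ad A *m (A *m Y) by rewrite -k3 -adM k1.
have e3 : X = X *m A *m Y.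
  rewrite [LHS]e1 e2 !mulmxA -(mulmxA X (ad X)) -adM h3 mulmxA h2 //.
have f1 : Y = ad A *m ad Y *m Y by rewrite -adM k4 k2.
have f2 : ad A = X *m A *m ad A by rewrite -h4 -adM mulmxA h1.
by rewrite [RHS]f1 f2 -(mulmxA (X *m A) (ad A)) -adM k4 -!mulmxA (mulmxA Y A Y) k2 mulmxA -e3.
Qed.

Lemma zf (V : zmodType) (a b c : V) : a + c - b - a + b = c.
Proof. by rewrite addrAC subrK addrC addKr. Qed.

Lemma fwd m n (A : 'M[C]_(m,n)) A1 X : A *m A1 *m A = A -> mi A X ->
  (ad A *m A + 1%:M - A1 *m A) \in unitmx.
Proof.
move=> hA [h1 h2 h3 h4].
set E := ad A *m A + 1%:M - A1 *m A.
have d1 : ad A = X *m A *m ad A by rewrite -h4 -adM mulmxA h1.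
have d2 : X *m (ad X *m (ad A *m A)) = X *m A.
  by rewrite (mulmxA (ad X)) -adM h3 h1.
have hA' : X *m A *m A1 *m A = X *m A by rewrite -!mulmxA (mulmxA A A1 A) hA.
have e1 : X *m A *m E = ad A *m A.
  by rewrite /E mulmxBr mulmxDr mulmx1 !mulmxA -d1 hA' addrK.
have e2 : A *m X *m ad X *m (X *m A *m E) = A.
  by rewrite e1 -!mulmxA d2 mulmxA h1.
have FE : (1%:M - X *m A + A1 *m (A *m X *m ad X *m (X *m A))) *m E = 1%:M.
  rewrite mulmxDl mulmxBl mul1mx -(mulmxA A1) -(mulmxA (A *m X *m ad X) (X *m A) E) e2 e1.
  by rewrite /E zf.
by case: (mulmx1_unit FE).
Qed.

Lemma bwd m n (A : 'M[C]_(m,n)) A1 : A *m A1 *m A = A ->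
  (ad A *m A + 1%:M - A1 *m A) \in unitmx ->
  mi A (ad (A *m invmx (ad A *m A + 1%:M - A1 *m A))).
Proof.
move=> hA U; rewrite adM.
set B := ad A; set E := B *m A + 1%:M - A1 *m A.
set Ei := invmx E; set Fi := ad Ei.
have hEi : Ei *m E = 1%:M := mulVmx U.
have hEi' : E *m Ei = 1%:M := mulmxV U.
have hB : ad B = A := adK A.
have hBA : ad (B *m A) = B *m A by rewrite adM hB.
have hQB : B *m ad A1 *m B = B by rewrite /B -!adM mulmxA hA.
have hPP : A1 *m A *m (A1 *m A) = A1 *m A by rewrite -mulmxA (mulmxA A A1 A) hA.
have hBP : B *m A *m (A1 *m A) = B *m A by rewrite -mulmxA (mulmxA A A1 A) hA.
have f2 : E *m (A1 *m A) = B *m A.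
  by rewrite /E mulmxBl mulmxDl mul1mx hPP hBP addrK.
have f3 : A1 *m A = Ei *m (B *m A) by rewrite -f2 (mulmxA Ei) hEi mul1mx.
have f4 : A = A *m Ei *m (B *m A) by rewrite -mulmxA -f3 mulmxA hA.
have hF : Fi *m ad E = 1%:M by rewrite /Fi -adM hEi' ad1.
have hF' : ad E *m Fi = 1%:M by rewrite /Fi -adM hEi ad1.
have hE' : ad E = B *m A + 1%:M - B *m ad A1 by rewrite /E adB adD ad1 hBA adM.
have f5 : B *m ad A1 = B *m A *m Fi.
  have := congr1 (@ad _ _) f2; rewrite !adM hB -/B => <-.
  by rewrite -mulmxA hF' mulmx1.
have f6 : B *m A *m Fi *m B = B by rewrite -f5 hQB.
have f7 : B *m A *m E = ad E *m (B *m A).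
  rewrite hE' /E mulmxBr mulmxDr mulmx1 hBP mulmxBl mulmxDl mul1mx.
  by rewrite !mulmxA hQB.
have f7' : Fi *m (B *m A) = B *m A *m Ei.
  by rewrite -[LHS]mulmx1 -hEi' mulmxA -(mulmxA Fi) f7 !mulmxA hF mul1mx.
have f1 : A *m E = A *m B *m A.
  by rewrite /E mulmxBr mulmxDr mulmx1 !mulmxA hA addrK.
have f6r : B *m (A *m (Fi *m B)) = B by rewrite !mulmxA f6.
have g : A *m (Fi *m B) = A *m Ei *m B.
  by rewrite {1}f4 -!mulmxA f6r.
split.
- rewrite -mulmxA -(mulmxA Fi) f7' !mulmxA -f1 -mulmxA hEi' mulmx1 //.
- by rewrite -!mulmxA f6r.
- by rewrite !adM hB /Fi adK -/B g.
- by rewrite (adM (Fi *m B) A) (adM Fi B) hB adK -/B -mulmxA f7' mulmxA.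
Qed.

Lemma E2adj m n (A : 'M[C]_(m,n)) A1 :
  ad (A *m ad A + 1%:M - A *m A1) = ad (ad A) *m ad A + 1%:M - ad A1 *m ad A.
Proof. by rewrite adB adD ad1 !adM. Qed.

Lemma hAadj m n (A : 'M[C]_(m,n)) A1 : A *m A1 *m A = A ->
  ad A *m ad A1 *m ad A = ad A.
Proof. by move=> hA; rewrite -!adM mulmxA hA. Qed.

End S.

Theorem theorem6p3 (C : numClosedFieldType) (m n : nat)
  (A : 'M[C]_(m, n)) (A1 : 'M[C]_(n, m)) :
  A *m A1 *m A = A ->
  (minkowski_inverse_exists A <->
     (madj A *m A + 1%:M - A1 *m A) \in unitmx) /\
  (minkowski_inverse_exists A <->
     (A *m madj A + 1%:M - A *m A1) \in unitmx) /\
  (forall X : 'M[C]_(n, m), is_minkowski_inverse A X ->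
     X = madj (A *m invmx (madj A *m A + 1%:M - A1 *m A)) /\
     X = madj (invmx (A *m madj A + 1%:M - A *m A1) *m A)).
Proof.
move=> hA; rewrite /minkowski_inverse_exists !adE.
have hA' := hAadj hA.
have P1 : (exists X, is_minkowski_inverse A X) <-> (ad A *m A + 1%:M - A1 *m A) \in unitmx.
  split.
  - by case=> X /miE HX; apply: fwd hA HX.
  - by move=> U; exists (ad (A *m invmx (ad A *m A + 1%:M - A1 *m A))); apply/miE/bwd.
have P2 : (exists X, is_minkowski_inverse A X) <-> (A *m ad A + 1%:M - A *m A1) \in unitmx.
  split.
  - case=> X /miE /mi_adj HX; rewrite -ad_unitE E2adj; exact: fwd hA' HX.
  - move=> U; rewrite -ad_unitE E2adj in U.
    have := mi_adj (bwd hA' U); rewrite adK => H.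
    by eexists; apply/miE; exact: H.
split => //; split => // X /miE HX; split.
- apply: (mi_uniq HX); apply: bwd => //; exact: fwd hA HX.
- have U : (A *m ad A + 1%:M - A *m A1) \in unitmx by apply/P2; exists X; apply/miE.
  have U' := U; rewrite -ad_unitE E2adj in U'.
  have := mi_adj (bwd hA' U'); rewrite adK => H.
  have e : ad (A *m ad A + 1%:M - A *m A1) = A *m ad A + 1%:M - ad A1 *m ad A by rewrite E2adj adK.
  by rewrite (mi_uniq HX H) adK -e ad_inv // adM.
Qed.
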